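(* Let $\mathcal{G}=(\mathcal{A},\phi)$ be a $\mathrm{PLTL}_{\mathbf{G}}$ game with $\mathrm{var}(\phi)\neq\emptyset$. For $y\in\mathrm{var}(\phi)$ let $\phi_y$ be the formula obtained from $\phi$ by inductively replacing every subformula $\mathbf{G}_{\le z}\psi$ with $z\neq y$ by $\psi$, and let $\mathcal{G}_y=(\mathcal{A},\phi_y)$. Then $\mathcal{W}^0_{\mathcal{G}}$ is infinite if and only if there exists $y\in\mathrm{var}(\phi)$ such that $\mathcal{W}^0_{\mathcal{G}_y}$ contains every valuation $\{y\}\to\mathbb{N}$ (or $\mathrm{var}(\phi_y)=\emptyset$ and Player 0 wins $\mathcal{G}_y$). Moreover, if $\phi$ is a PLTL formula containing at least one operator $\mathbf{F}_{\le x}$, then $\mathcal{W}^0_{(\mathcal{A},\phi)}$ is infinite if and only if it is non-empty.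
   Context: PLTL formulae over atomic propositions $P$ and disjoint variable sets $\mathcal{X},\mathcal{Y}$: $\phi::= p\mid\neg p\mid\phi\wedge\phi\mid\phi\vee\phi\mid\mathbf{X}\phi\mid\phi\mathbf{U}\phi\mid\phi\mathbf{R}\phi\mid\mathbf{F}_{\le x}\phi\mid\mathbf{G}_{\le y}\phi$ ($x\in\mathcal{X}$, $y\in\mathcal{Y}$), with LTL semantics for unparameterized operators and, w.r.t. $\alpha\colon\mathcal{X}\cup\mathcal{Y}\to\mathbb{N}$: $\mathbf{F}_{\le x}\phi$ holds at $i$ iff $\phi$ holds at some $i+j$, $0\le j\le\alpha(x)$; $\mathbf{G}_{\le y}\phi$ holds at $i$ iff $\phi$ holds at all $i+j$, $0\le j\le\alpha(y)$. $\phi$ is $\mathrm{PLTL}_{\mathbf{G}}$ if $\mathrm{var}(\phi)\subseteq\mathcal{Y}$. In the game $(\mathcal{A},\phi)$ on a finite arena $\mathcal{A}=(V,V_0,V_1,E,v_0,\ell)$, Player 0 wins a play $\rho$ w.r.t. $\alpha$ iff $(\ell(\rho_0)\ell(\rho_1)\cdots,0,\alpha)\models\phi$. $\mathcal{W}^0_{\mathcal{G}}$ is the set of valuations $\alpha\colon\mathrm{var}(\phi)\to\mathbb{N}$ for which Player 0 has a strategy winning every consistent play w.r.t. $\alpha$. *)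

(* Defs.v *)
From mathcomp Require Import all_boot.
From Stdlib Require List.
Set Implicit Arguments. Unset Strict Implicit. Unset Printing Implicit Defensive.

(* PLTL formulae over atomic propositions P and variable types X (for F_{<=x})
   and Y (for G_{<=y}); disjointness of the two variable sets is built in by
   using separate types. *)
Inductive pltl (P : Type) (X Y : eqType) : Type :=
| PAtom  of P
| PNAtom of P
| PAnd   of pltl P X Y & pltl P X Y
| POr    of pltl P X Y & pltl P X Y
| PNext  of pltl P X Y
| PUntil of pltl P X Y & pltl P X Y
| PRel   of pltl P X Y & pltl P X Y
| PFle   of X & pltl P X Y
| PGle   of Y & pltl P X Y.

Arguments PAtom {P X Y}. Arguments PNAtom {P X Y}.

Section PLTL.
Variables (P : Type) (X Y : eqType).
Notation form := (pltl P X Y).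

Fixpoint vars (f : form) : seq (X + Y)%type :=
  match f with
  | PAtom _ | PNAtom _ => [::]
  | PAnd a b | POr a b | PUntil a b | PRel a b => vars a ++ vars b
  | PNext a => vars a
  | PFle x a => inl x :: vars a
  | PGle y a => inr y :: vars a
  end.

Fixpoint sat (w : nat -> P -> bool) (al : (X + Y)%type -> nat) (f : form) (i : nat)
  : Prop :=
  match f with
  | PAtom p => w i p
  | PNAtom p => ~~ w i p
  | PAnd a b => sat w al a i /\ sat w al b i
  | POr a b => sat w al a i \/ sat w al b i
  | PNext a => sat w al a i.+1
  | PUntil a b => exists k, i <= k /\ sat w al b k /\
                    (forall j, i <= j -> j < k -> sat w al a j)
  | PRel a b => forall k, i <= k -> sat w al b k \/
                    (exists j, i <= j /\ j < k /\ sat w al a j)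
  | PFle x a => exists j, j <= al (inl x) /\ sat w al a (i + j)
  | PGle y a => forall j, j <= al (inr y) -> sat w al a (i + j)
  end.

Definition is_pltlG (f : form) : Prop :=
  forall v, v \in vars f -> exists y, v = inr y.

Fixpoint proj_y (y : Y) (f : form) : form :=
  match f with
  | PAtom p => PAtom p
  | PNAtom p => PNAtom p
  | PAnd a b => PAnd (proj_y y a) (proj_y y b)
  | POr a b => POr (proj_y y a) (proj_y y b)
  | PNext a => PNext (proj_y y a)
  | PUntil a b => PUntil (proj_y y a) (proj_y y b)
  | PRel a b => PRel (proj_y y a) (proj_y y b)
  | PFle x a => PFle x (proj_y y a)
  | PGle z a => if z == y then PGle z (proj_y y a) else proj_y y a
  end.

End PLTL.

(* Finite arena: own v = false means v in V_0 (Player 0), true means v in V_1.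
   Every vertex has a successor (standard for arenas with infinite plays). *)
Record arena (P : Type) := Arena {
  vert : finType;
  own : vert -> bool;
  edge : rel vert;
  init : vert;
  lab : vert -> P -> bool;
  edge_total : forall v, exists v', edge v v'
}.
Arguments vert {P} a. Arguments own {P} a _. Arguments edge {P} a _ _.
Arguments init {P} a. Arguments lab {P} a _ _.

Section Game.
Variables (P : Type) (X Y : eqType) (A : arena P).
Notation V := (vert A).

Definition strategy := seq V -> V.

Definition legal (s : strategy) : Prop :=
  forall (h : seq V) (v : V), own A (last v h) = false ->
    edge A (last v h) (s (v :: h)).

Definition prefix (r : nat -> V) (n : nat) : seq V := map r (iota 0 n.+1).

Definition consistent (s : strategy) (r : nat -> V) : Prop :=
  r 0 = init A /\
  (forall n, edge A (r n) (r n.+1)) /\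
  (forall n, own A (r n) = false -> r n.+1 = s (prefix r n)).

Definition valuation (f : pltl P X Y) := {v : (X + Y)%type | v \in vars f} -> nat.

Definition extend (f : pltl P X Y) (b : valuation f) : (X + Y)%type -> nat :=
  fun v => match insub v with Some s => b s | None => 0 end.

Definition W0 (f : pltl P X Y) (b : valuation f) : Prop :=
  exists s : strategy, legal s /\
    forall r, consistent s r -> sat (fun n => lab A (r n)) (extend b) f 0.

End Game.

Definition infinite_set (T : Type) (S : T -> Prop) : Prop :=
  ~ exists l : list T, forall t, S t -> List.In t l.

(* Main.v *)
Require Import Defs.
From mathcomp Require Import all_boot.
From Stdlib Require Import Classical FunctionalExtensionality.
From Stdlib Require List.
Set Implicit Arguments. Unset Strict Implicit. Unset Printing Implicit Defensive.

Section Helpers.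
Variables (P : Type) (X Y : eqType).
Notation form := (pltl P X Y).

Definition agree (al al' : (X + Y)%type -> nat) (v : (X + Y)%type) : Prop :=
  match v with inl _ => al' v <= al v | inr _ => al v <= al' v end.

Lemma sat_mono w (f : form) al al' :
  (forall v, v \in vars f -> agree al al' v) ->
  forall i, sat w al' f i -> sat w al f i.
Proof.
elim: f => [p|p|a IHa b IHb|a IHa b IHb|a IHa|a IHa b IHb|a IHa b IHb|x a IHa|y a IHa] /= Hv i.
- by [].
- by [].
- have Ha : forall v, v \in vars a -> agree al al' v by move=> v H; apply: Hv; rewrite mem_cat H.
  have Hb : forall v, v \in vars b -> agree al al' v by move=> v H; apply: Hv; rewrite mem_cat H orbT.
  by case=> H1 H2; split; [apply: IHa|apply: IHb].
- have Ha : forall v, v \in vars a -> agree al al' v by move=> v H; apply: Hv; rewrite mem_cat H.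
  have Hb : forall v, v \in vars b -> agree al al' v by move=> v H; apply: Hv; rewrite mem_cat H orbT.
  by case=> H; [left; apply: IHa|right; apply: IHb].
- by apply: IHa.
- have Ha : forall v, v \in vars a -> agree al al' v by move=> v H; apply: Hv; rewrite mem_cat H.
  have Hb : forall v, v \in vars b -> agree al al' v by move=> v H; apply: Hv; rewrite mem_cat H orbT.
  case=> k [H1 [H2 H3]]; exists k; split=> //; split; first by apply: IHb.
  by move=> j Hj1 Hj2; apply: IHa => //; apply: H3.
- have Ha : forall v, v \in vars a -> agree al al' v by move=> v H; apply: Hv; rewrite mem_cat H.
  have Hb : forall v, v \in vars b -> agree al al' v by move=> v H; apply: Hv; rewrite mem_cat H orbT.
  move=> H k Hk; case: (H k Hk) => [H1|[j [H1 [H2 H3]]]]; first by left; apply: IHb.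
  by right; exists j; do 2!split=> //; apply: IHa.
- have Ha : forall v, v \in vars a -> agree al al' v by move=> v H; apply: Hv; rewrite inE H orbT.
  have Hx := Hv (inl x) (mem_head _ _).
  case=> j [Hj H]; exists j; split; first exact: leq_trans Hj Hx.
  by apply: IHa.
- have Ha : forall v, v \in vars a -> agree al al' v by move=> v H; apply: Hv; rewrite inE H orbT.
  have Hy := Hv (inr y) (mem_head _ _).
  move=> H j Hj; apply: IHa => //; apply: H; exact: leq_trans Hj Hy.
Qed.

Lemma sat_proj1 w (f : form) y al i : sat w al f i -> sat w al (proj_y y f) i.
Proof.
elim: f i => [p|p|a IHa b IHb|a IHa b IHb|a IHa|a IHa b IHb|a IHa b IHb|x a IHa|z a IHa] i /=.
- by [].
- by [].
- by case=> H1 H2; split; [apply: IHa|apply: IHb].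
- by case=> H; [left; apply: IHa|right; apply: IHb].
- by apply: IHa.
- case=> k [H1 [H2 H3]]; exists k; split=> //; split; first by apply: IHb.
  by move=> j Hj1 Hj2; apply: IHa => //; apply: H3.
- move=> H k Hk; case: (H k Hk) => [H1|[j [H1 [H2 H3]]]]; first by left; apply: IHb.
  by right; exists j; do 2!split=> //; apply: IHa.
- by case=> j [Hj H]; exists j; split=> //; apply: IHa.
- move=> H; case: (z == y) => /=.
  + by move=> j Hj; apply: IHa; apply: H.
  + by have := H 0 (leq0n _); rewrite addn0; apply: IHa.
Qed.

Lemma sat_proj2 w (f : form) y al i :
  (forall z, z != y -> al (inr z) = 0) ->
  sat w al (proj_y y f) i -> sat w al f i.
Proof.
move=> H0.
elim: f i => [p|p|a IHa b IHb|a IHa b IHb|a IHa|a IHa b IHb|a IHa b IHb|x a IHa|z a IHa] i /=.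
- by [].
- by [].
- by case=> H1 H2; split; [apply: IHa|apply: IHb].
- by case=> H; [left; apply: IHa|right; apply: IHb].
- by apply: IHa.
- case=> k [H1 [H2 H3]]; exists k; split=> //; split; first by apply: IHb.
  by move=> j Hj1 Hj2; apply: IHa => //; apply: H3.
- move=> H k Hk; case: (H k Hk) => [H1|[j [H1 [H2 H3]]]]; first by left; apply: IHb.
  by right; exists j; do 2!split=> //; apply: IHa.
- by case=> j [Hj H]; exists j; split=> //; apply: IHa.
- case: (eqVneq z y) => [->|Hz] /=.
  + by move=> H j Hj; apply: IHa; apply: H.
  + move=> H j; rewrite H0 // leqn0 => /eqP ->; rewrite addn0; exact: IHa.
Qed.

Lemma proj_vars (f : form) y v : v \in vars (proj_y y f) ->
  v \in vars f /\ (forall z, v = inr z -> z = y).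
Proof.
elim: f => [p|p|a IHa b IHb|a IHa b IHb|a IHa|a IHa b IHb|a IHa b IHb|x a IHa|z a IHa] /=;
  rewrite ?mem_cat ?inE //.
- by case/orP=> [/IHa|/IHb] [H1 H2]; rewrite ?H1 ?H2 ?orbT.
- by case/orP=> [/IHa|/IHb] [H1 H2]; rewrite ?H1 ?H2 ?orbT.
- by case/orP=> [/IHa|/IHb] [H1 H2]; rewrite ?H1 ?H2 ?orbT.
- by case/orP=> [/IHa|/IHb] [H1 H2]; rewrite ?H1 ?H2 ?orbT.
- case/orP=> [/eqP ->|/IHa [H1 H2]]; first by split; [rewrite eqxx|].
  by rewrite H1 orbT.
- case: (eqVneq z y) => [->|Hz] /=; rewrite ?inE.
  + case/orP=> [/eqP ->|/IHa [H1 H2]]; first by split; [rewrite eqxx|move=> z' []].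
    by rewrite H1 orbT.
  + by move/IHa=> [H1 H2]; rewrite H1 orbT.
Qed.

End Helpers.

Section GameH.
Variables (P : Type) (X Y : eqType) (A : arena P).
Notation form := (pltl P X Y).

Lemma extend_val (f : form) (b : valuation f) s : extend b (val s) = b s.
Proof. by rewrite /extend valK. Qed.

Lemma extend_in (f : form) (b : valuation f) v (H : v \in vars f) :
  extend b v = b (exist _ v H).
Proof. by rewrite /extend insubT. Qed.

Lemma W0_mono (f : form) (b b' : valuation f) :
  (forall v, v \in vars f -> agree (extend b) (extend b') v) ->
  W0 A b' -> W0 A b.
Proof.
move=> Hv [s [Hl Hs]]; exists s; split=> // r Hr.
by apply: (sat_mono Hv); apply: Hs.
Qed.

Lemma proj_vars_inr (f : form) y v : is_pltlG f -> v \in vars (proj_y y f) -> v = inr y.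
Proof.
move=> Hg /proj_vars [H1 H2]; case: (Hg v H1) => z Ez.
by rewrite Ez (H2 z Ez).
Qed.

Lemma W0_to_proj (f : form) y (b : valuation f) (b' : valuation (proj_y y f)) :
  is_pltlG f -> extend b' (inr y) <= extend b (inr y) ->
  W0 A b -> W0 A b'.
Proof.
move=> Hg Hle [s [Hl Hs]]; exists s; split=> // r Hr.
apply: (sat_mono (al' := extend b)); last by apply: sat_proj1; apply: Hs.
by move=> v /(proj_vars_inr Hg) ->.
Qed.

Lemma W0_from_proj (f : form) y (b : valuation f) (b' : valuation (proj_y y f)) :
  is_pltlG f -> extend b (inr y) <= extend b' (inr y) ->
  (forall z, z != y -> extend b (inr z) = 0) ->
  W0 A b' -> W0 A b.
Proof.
move=> Hg Hle H0 [s [Hl Hs]]; exists s; split=> // r Hr.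
apply: (sat_proj2 (y := y)) => //.
apply: (sat_mono (al' := extend b')); last by apply: Hs.
by move=> v /(proj_vars_inr Hg) ->.
Qed.

End GameH.

Fixpoint bnd (T : Type) (g : T -> nat) (l : list T) : nat :=
  match l with nil => 0 | cons t l' => g t + bnd g l' end.

Lemma bnd_In (T : Type) (g : T -> nat) l t : List.In t l -> g t <= bnd g l.
Proof.
elim: l => //= a l IH [->|H]; first exact: leq_addr.
exact: leq_trans (IH H) (leq_addl _ _).
Qed.

Fixpoint allseq (N k : nat) : list (seq nat) :=
  match k with
  | 0 => cons [::] nil
  | k'.+1 => List.flat_map (fun x => List.map (cons x) (allseq N k')) (List.seq 0 N)
  end.

Lemma allseq_In N t : all (fun a => a < N) t -> List.In t (allseq N (size t)).
Proof.
elim: t => [|a t IH] /=; first by left.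
case/andP=> Ha Ht; apply/List.in_flat_map; exists a; split.
  apply/List.in_seq; split; first by apply/leP.
  by move/ltP: Ha.
by apply: List.in_map; apply: IH.
Qed.

Lemma bound_ex (T : eqType) (s : seq T) (Q : T -> nat -> Prop) :
  (forall v n m, n <= m -> Q v n -> Q v m) ->
  (forall v, v \in s -> exists n, Q v n) -> exists N, forall v, v \in s -> Q v N.
Proof.
move=> Hup; elim: s => [|a s IH] H; first by exists 0.
have [n Hn] := H a (mem_head _ _).
have [N HN] := IH (fun v Hv => H v (mem_behead (s := a :: s) Hv)).
exists (maxn n N) => v; rewrite inE; case/orP=> [/eqP ->|Hv].
  by apply: Hup Hn; exact: leq_maxl.
by apply: Hup (HN v Hv); exact: leq_maxr.
Qed.

Lemma proj_keep (P : Type) (X Y : eqType) (f : pltl P X Y) y :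
  inr y \in vars f -> inr y \in vars (proj_y y f).
Proof.
elim: f => [p|p|a IHa b IHb|a IHa b IHb|a IHa|a IHa b IHb|a IHa b IHb|x a IHa|z a IHa] /=;
  rewrite ?mem_cat ?inE //; try by case/orP=> [/IHa->|/IHb->]; rewrite ?orbT.
- case: (eqVneq z y) => [->|Hz] /=; rewrite ?inE ?eqxx //.
  case/orP=> [/eqP [] E|/IHa //]; by rewrite E eqxx in Hz.
Qed.

Section Main.
Variables (P : Type) (X Y : eqType) (A : arena P).

Lemma part1_bwd (phi : pltl P X Y) (Hg : is_pltlG phi) y (Hy : inr y \in vars phi)
  (Hall : forall b : valuation (proj_y y phi), W0 A b) : infinite_set (W0 A (f:=phi)).
Proof.
case=> l Hl.
pose sy : {v | v \in vars phi} := exist _ (inr y) Hy.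
pose N := (bnd (fun t : valuation phi => t sy) l).+1.
pose bN : valuation phi := fun s => if val s == inr y then N else 0.
have W : W0 A bN.
  apply: (W0_from_proj (y:=y) (b' := fun _ => N)) => //.
  - by rewrite (extend_in _ Hy) (extend_in _ (proj_keep Hy)) /bN /= eqxx.
  - move=> z Hz; rewrite /extend; case: insubP => [s _ Es|] //=.
    rewrite /bN Es; case: eqP => // [[E]]; by rewrite E eqxx in Hz.
have := bnd_In (fun t => t sy) (Hl _ W).
by rewrite /bN /= eqxx ltnn.
Qed.


Lemma part1_fwd (phi : pltl P X Y) (Hg : is_pltlG phi) :
  infinite_set (W0 A (f:=phi)) ->
  exists y : Y, inr y \in vars phi /\ forall b : valuation (proj_y y phi), W0 A b.
Proof.
move=> Hinf; apply: NNPP => Hno; apply: Hinf.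
pose cv y n : valuation (proj_y y phi) := fun _ => n.
pose Q (v : (X + Y)%type) (n : nat) := forall y, v = inr y -> ~ W0 A (cv y n).
have Hex : forall v, v \in vars phi -> exists n, Q v n.
  move=> v Hv; case: (Hg v Hv) => y Ey; subst v.
  have [b Hb] : exists b : valuation (proj_y y phi), ~ W0 A b.
    by apply: not_all_ex_not => Hall; apply: Hno; exists y; split.
  exists (extend b (inr y)) => z [<-] W; apply: Hb; clear Hv.
  apply: W0_mono W => v Hv; move: (Hv); rewrite (proj_vars_inr Hg Hv) => Hv'.
  by rewrite /agree (extend_in _ Hv') (extend_in _ Hv') /=.
have Hup : forall v n m, n <= m -> Q v n -> Q v m.
  move=> v n m Hnm Hq y Ey W; apply: (Hq y Ey).
  apply: W0_mono W => v' /(proj_vars_inr Hg) ->; rewrite /agree /extend.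
  by case: insub.
have [N HN] := bound_ex Hup Hex.
have Hbd : forall b : valuation phi, W0 A b -> forall s, b s < N.
  move=> b Wb s; rewrite ltnNge; apply/negP => Hs.
  case: (Hg _ (valP s)) => y Ey.
  apply: (HN _ (valP s) y Ey).
  have W1 : W0 A (cv y (b s)).
    apply: (W0_to_proj Hg _ Wb).
    by rewrite -Ey extend_val /extend; case: insub.
  apply: W0_mono W1 => v /(proj_vars_inr Hg) ->; rewrite /agree /extend.
  by case: insub.
pose g (t : seq nat) : valuation phi := fun s => nth 0 t (index (val s) (vars phi)).
exists (List.map g (allseq N (size (vars phi)))) => b Wb.
have -> : b = g (map (extend b) (vars phi)).
  apply: functional_extensionality => s.
  rewrite /g (nth_map (val s)) ?index_mem ?valP //.
  rewrite (nth_index _ (valP s)) extend_val //.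
  exact: valP.
apply: (List.in_map g).
have Hall : all (fun a => a < N) (map (extend b) (vars phi)).
  apply/allP => a /mapP [v Hv ->]; rewrite (extend_in _ Hv); exact: Hbd.
by have := allseq_In Hall; rewrite size_map.
Qed.

Lemma part2 (phi : pltl P X Y) : (exists x : X, inl x \in vars phi) ->
  (infinite_set (W0 A (f:=phi)) <-> exists b : valuation phi, W0 A b).
Proof.
move=> Hx; split.
  move=> Hinf; apply: NNPP => Hno; apply: Hinf; exists nil => b Wb; apply: Hno.
  by exists b.
case=> b Wb [l Hl]; case: Hx => x Hxin.
pose sx : {v | v \in vars phi} := exist _ (inl x) Hxin.
pose N := (b sx + bnd (fun t : valuation phi => t sx) l).+1.
pose bN : valuation phi := fun s => if val s == inl x then N else b s.
have W : W0 A bN.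
  apply: W0_mono Wb => v Hv; case: v Hv => [x'|y'] Hv /=;
  rewrite (extend_in bN Hv) (extend_in b Hv) /bN /=; try case: ifP => //= E.
  - move/eqP: E => [E]; subst x'.
    by rewrite /N (bool_irrelevance Hv Hxin); apply: leqW; exact: leq_addr.
  - by [].
have := bnd_In (fun t => t sx) (Hl _ W).
rewrite /bN /= eqxx /N => H.
by have := leq_trans H (leq_addl (b sx) _); rewrite ltnn.
Qed.

End Main.

Theorem mainTheorem5 :
  (forall (P : Type) (X Y : eqType) (A : arena P) (phi : pltl P X Y),
     is_pltlG phi -> vars phi <> [::] ->
     (infinite_set (W0 A (f:=phi)) <->
      exists y : Y, inr y \in vars phi /\
        forall b : valuation (proj_y y phi), W0 A b)) /\
  (forall (P : Type) (X Y : eqType) (A : arena P) (phi : pltl P X Y),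
     (exists x : X, inl x \in vars phi) ->
     (infinite_set (W0 A (f:=phi)) <-> exists b : valuation phi, W0 A b)).
Proof.
split.
  move=> P X Y A phi Hg _; split; first exact: part1_fwd.
  by case=> y [Hy Hall]; exact: part1_bwd Hall.
move=> P X Y A phi; exact: part2.
Qed.
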